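(* Let $m,n$ be positive integers and let $\tau=1^m\text{-}1^m\text{-}\cdots\text{-}1^m$ be the pattern consisting of $n$ runs of $m$ ones separated by $n-1$ dashes. Let $H(x,u,v)=\sum_{\phi}x^{\mathrm{len}(\phi)}u^{\mathrm{parts}(\phi)}v^{\mathrm{fst}(\phi)}$, the sum over all factorizations $\phi$ on the one-letter alphabet $\{1\}$ (including the empty factorization) that avoid $\tau$. Then \[ H(x,u,v)=1+\left[\frac{1-x}{(1-vx)(1-x-ux)}\right]\left[u(vx-(vx)^{mn})+\frac{u^2x^m\left((1-vx)(z-(vx)^m)z^{n-1}-(1-(vx)^m)(z^n-(vx)^{mn})\right)}{(z-(vx)^m)(1-x-u(x-x^m))}\right], \] where \[ z=x^m+\frac{ux^m(1-x^m)}{1-x-u(x-x^m)}. \]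
   Context: A factorization on $\{1\}$ is an ordered list $(\phi_1)\cdots(\phi_k)$ of nonempty words $\phi_j=1^{c_j}$; $\mathrm{parts}(\phi)=k$, $\mathrm{len}(\phi)=c_1+\cdots+c_k$, and $\mathrm{fst}(\phi)=c_1$ is the length of the first part ($\mathrm{fst}(\emptyset)=0$). A factorization $\phi$ contains $\tau$ if the word obtained from $\phi$ by inserting a single letter $0$ between each pair of adjacent parts contains $\tau$ by an occurrence not using the letter $0$; here a word contains $1^{m}\text{-}\cdots\text{-}1^{m}$ ($n$ runs) if it has $nm$ occurrences of the same letter at positions $i_1<\cdots<i_{nm}$ such that positions within each consecutive block of $m$ of them are consecutive in the word. Equivalently, $\phi$ contains $\tau$ iff one can choose $n$ disjoint runs of $m$ consecutive ones, each lying within a single part. Otherwise $\phi$ avoids $\tau$. *)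

(* Defs.v *)
From HB Require Import structures.
From mathcomp Require Import all_boot all_order all_algebra.
From mathcomp Require Import all_classical all_reals all_analysis.
Set Implicit Arguments. Unset Strict Implicit. Unset Printing Implicit Defensive.
Import Order.TTheory GRing.Theory Num.Theory.
Local Open Scope ring_scope.

(* A factorization on {1}: the list [c_1; ...; c_k] of the part lengths,
   i.e. phi = (1^{c_1}) ... (1^{c_k}) with every c_j >= 1. *)
Definition is_factorization (phi : seq nat) : bool := all (fun c => (0 < c)%N) phi.
Definition parts (phi : seq nat) : nat := size phi.
Definition len (phi : seq nat) : nat := sumn phi.
Definition fst (phi : seq nat) : nat := head 0%N phi.  (* fst(empty) = 0 *)

(* phi contains tau = 1^m-...-1^m (n runs) iff one can choose n disjoint runs
   of m consecutive ones, each lying within a single part.  A run is encoded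
   by (j, a): part index j, occupying positions a, ..., a+m-1 of part j. *)
Definition contains_tau (m n : nat) (phi : seq nat) : Prop :=
  exists s : seq (nat * nat),
    size s = n /\
    (forall p, p \in s -> (p.1 < size phi)%N /\ (p.2 + m <= nth 0%N phi p.1)%N) /\
    pairwise (fun p q : nat * nat =>
      [|| p.1 != q.1, (p.2 + m <= q.2)%N | (q.2 + m <= p.2)%N]) s.

Definition avoids_tau (m n : nat) (phi : seq nat) : bool := ~~ `[< contains_tau m n phi >].

Definition seq_of k L (f : {ffun 'I_k -> 'I_L}) : seq nat := [seq nat_of_ord (f i) | i <- enum 'I_k].

(* Every such factorization has k <= L parts, each
   of size <= L, and is enumerated exactly once by some f : 'I_k -> 'I_(L+1). *)
Definition coeffH (R : realType) (m n L : nat) (u v : R) : R :=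
  \sum_(k < L.+1) \sum_(f : {ffun 'I_k -> 'I_L.+1} |
       [&& is_factorization (seq_of f), len (seq_of f) == L & avoids_tau m n (seq_of f)])
    u ^+ parts (seq_of f) * v ^+ fst (seq_of f).

Definition zH (R : realType) (m : nat) (x u : R) : R :=
  x ^+ m + u * x ^+ m * (1 - x ^+ m) / (1 - x - u * (x - x ^+ m)).

Definition Hclosed (R : realType) (m n : nat) (x u v : R) : R :=
  let z := zH m x u in
  1 + ((1 - x) / ((1 - v * x) * (1 - x - u * x))) *
      (u * (v * x - (v * x) ^+ (m * n)) +
       (u ^+ 2 * x ^+ m *
          ((1 - v * x) * (z - (v * x) ^+ m) * z ^+ (n - 1)
           - (1 - (v * x) ^+ m) * (z ^+ n - (v * x) ^+ (m * n))))
       / ((z - (v * x) ^+ m) * (1 - x - u * (x - x ^+ m)))).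

(* Main.v *)
Require Import Defs.
From HB Require Import structures.
From mathcomp Require Import all_boot all_order all_algebra.
From mathcomp Require Import all_classical all_reals all_analysis.
From mathcomp Require Import zify ring lra.
Import Order.TTheory GRing.Theory Num.Theory.
Import numFieldNormedType.Exports.
Set Implicit Arguments. Unset Strict Implicit. Unset Printing Implicit Defensive.

Definition fsum (m : nat) (p : seq nat) : nat := sumn [seq c %/ m | c <- p].

Lemma fsum_big m p : fsum m p = \sum_(j < size p) (nth 0 p j %/ m).
Proof.
elim: p => [|c p IH]; first by rewrite big_ord0.
by rewrite big_ord_recl /= /fsum /= -/(fsum m p) IH.
Qed.

Definition runrel (m : nat) := fun p q : nat * nat =>
  [|| p.1 != q.1, (p.2 + m <= q.2)%N | (q.2 + m <= p.2)%N].

Definition cover (m : nat) (t : seq (nat * nat)) := flatten [seq iota q.2 m | q <- t].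

Lemma size_cover m t : size (cover m t) = m * size t.
Proof. rewrite /cover; elim: t => [|q t IH] /=; first by rewrite muln0.
rewrite size_cat size_iota IH /=; lia. Qed.

Lemma cover_uniq m j t : all (fun q => q.1 == j) t -> pairwise (runrel m) t ->
  uniq (cover m t).
Proof.
elim: t => [|q t IH] //= /andP[/eqP qj Hall] /andP[Hq Hp].
rewrite /cover /= cat_uniq iota_uniq -/(cover m t) IH // andbT.
apply/hasP => -[y /flattenP[l /mapP[q' q't ->] yq'] yq].
move/allP: Hq => /(_ q' q't); move/allP: Hall => /(_ q' q't) /eqP q'j.
rewrite /runrel qj q'j eqxx /=.
move: yq yq'; rewrite !mem_iota => /andP[h1 h2] /andP[h3 h4].
move=> /orP[] ?; lia.
Qed.

Lemma count_runs m c j t : (0 < m)%N -> all (fun q => q.1 == j) t ->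
  pairwise (runrel m) t -> (forall q, q \in t -> (q.2 + m <= c)%N) ->
  (size t <= c %/ m)%N.
Proof.
move=> m0 Hall Hp Hin.
rewrite leq_divRL //.
have : (size (cover m t) <= size (iota 0 c))%N.
  apply: uniq_leq_size; first exact: cover_uniq Hall Hp.
  move=> y /flattenP[l /mapP[q qt ->]]; rewrite !mem_iota => /andP[_ h].
  by rewrite add0n /= (leq_trans h (Hin q qt)).
rewrite size_cover size_iota mulnC //.
Qed.

Lemma size_split_runs (t : seq (nat * nat)) K : (forall q, q \in t -> (q.1 < K)%N) ->
  size t = \sum_(j < K) size [seq q <- t | q.1 == nat_of_ord j].
Proof.
elim: t => [|q t IH] H /=; first by rewrite big1.
rewrite IH; last by move=> q' q't; apply: H; rewrite inE q't orbT.
have qK : (q.1 < K)%N by apply: H; rewrite mem_head.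
rewrite [RHS](eq_bigr (fun j : 'I_K => (q.1 == j) + size [seq q0 <- t | q0.1 == nat_of_ord j])%N);
  last by move=> j _; case: ifP.
rewrite big_split /= -add1n; congr (_ + _).
rewrite (bigD1 (Ordinal qK)) //= eqxx big1 //.
by move=> j /negPf; rewrite -val_eqE /= eq_sym => ->.
Qed.

Definition runs_of (m : nat) (p : seq nat) (js : seq nat) : seq (nat * nat) :=
  flatten [seq [seq (j, i * m) | i <- iota 0 (nth 0 p j %/ m)] | j <- js].

Lemma runs_size m p js : size (runs_of m p js) = sumn [seq nth 0 p j %/ m | j <- js].
Proof.
rewrite /runs_of; elim: js => [|j js IH] //=.
by rewrite size_cat size_map size_iota IH.
Qed.

Lemma runs_mem m p js q : (0 < m)%N -> q \in runs_of m p js ->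
  q.1 \in js /\ (q.2 + m <= nth 0 p q.1)%N.
Proof.
move=> m0 /flattenP[l /mapP[j jjs ->] /mapP[i]]; rewrite mem_iota => /andP[_ hi] -> /=.
split=> //; rewrite add0n leq_divRL // mulSn in hi.
by rewrite addnC.
Qed.

Lemma runs_pw m p js : (0 < m)%N -> uniq js -> pairwise (runrel m) (runs_of m p js).
Proof.
move=> m0; rewrite /runs_of; elim: js => [|j js IH] //= /andP[jn Hu].
rewrite pairwise_cat -/(runs_of m p js) IH // andbT; apply/andP; split.
  apply/allrelP => q q' /mapP[i _ ->] /(runs_mem m0) [h _] /=.
  rewrite /runrel /=; apply/orP; left; apply/negP => /eqP E.
  by move: jn; rewrite E h.
rewrite pairwise_map.
have : pairwise ltn (iota 0 (nth 0 p j %/ m)) by rewrite -(sorted_pairwise ltn_trans) iota_ltn_sorted.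
apply: sub_pairwise => i i' /= ii'.
rewrite /runrel /= eqxx /=; apply/orP; left.
by rewrite addnC -mulSn leq_mul2r ii' orbT.
Qed.

Lemma contains_iff m n p : (0 < m)%N -> contains_tau m n p <-> (n <= fsum m p)%N.
Proof.
move=> m0; split.
  move=> [s [sz [Hin Hp]]].
  have Hp' : pairwise (runrel m) s by [].
  rewrite -sz fsum_big (size_split_runs (K := size p)); last by move=> q /Hin [].
  apply: leq_sum => j _.
  apply: (count_runs (j := j)) => //.
  - exact: filter_all.
  - exact: pairwise_filter.
  - move=> q; rewrite mem_filter => /andP[/eqP <- qs]; exact: (Hin q qs).2.
move=> hn.
have hsz : (n <= size (runs_of m p (iota 0 (size p))))%N.
  rewrite runs_size; suff -> : [seq nth 0 p j %/ m | j <- iota 0 (size p)] = [seq c %/ m | c <- p] by [].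
  by rewrite -{3}(mkseq_nth 0 p) /mkseq -map_comp.
exists (take n (runs_of m p (iota 0 (size p)))); split; first by rewrite size_takel.
split.
  move=> q /mem_take /(runs_mem m0) [h1 h2]; split=> //.
  by move: h1; rewrite mem_iota.
apply: (subseq_pairwise (take_subseq _ _)).
exact: runs_pw m0 (iota_uniq _ _).
Qed.

Definition incr_head (s : seq nat) : seq nat :=
  if s is d :: r then d.+1 :: r else [::].

Fixpoint comps0 (L : nat) : seq (seq nat) :=
  if L is L'.+1 then [seq incr_head p | p <- comps0 L'] ++ [seq 0 :: incr_head p | p <- comps0 L']
  else [:: [:: 0]].

Definition comps (L : nat) : seq (seq nat) :=
  if L is L'.+1 then [seq incr_head p | p <- comps0 L'] else [:: [::]].

Lemma mem_comps0 L p :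
  (p \in comps0 L) = [&& (0 < size p)%N, all (fun c => 0 < c)%N (behead p) & sumn p == L].
Proof.
elim: L p => [|L IH] p /=.
  rewrite inE; case: p => [|d r] //=.
  apply/eqP/idP => [[-> ->]|] //=.
  move=> /andP[Ha /eqP Hs]; case: r Ha Hs => [|c r] /=; first by rewrite addn0 => _ ->.
  move=> /andP[c0 _] Hs; exfalso; lia.
rewrite mem_cat; apply/orP/idP.
  move=> [] /mapP[q]; rewrite IH; case: q => [|d r] //= /andP[Ha /eqP Hs] ->.
    by rewrite /= Ha -Hs addSn eqxx.
  by rewrite /= Ha -Hs addSn add0n eqxx.
case: p => [|d r] //= /andP[Ha /eqP Hs].
case: d Hs => [|d] Hs.
  right; case: r Ha Hs => [|c r] //= /andP[c0 Ha] Hs.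
  case: c c0 Hs => [|c] // _ Hs.
  apply/mapP; exists (c :: r) => //; rewrite IH /= Ha.
  by apply/eqP; lia.
left; apply/mapP; exists (d :: r) => //; rewrite IH /= Ha.
by apply/eqP; lia.
Qed.

Lemma comps0_uniq L : uniq (comps0 L).
Proof.
elim: L => [|L IH] //=.
have inj : {in comps0 L &, injective incr_head}.
  move=> p q; rewrite !mem_comps0; case: p => [|d r] //; case: q => [|d' r'] //= _ _ [-> ->] //.
rewrite cat_uniq !map_inj_in_uniq //; last by move=> p q Hp Hq [] /inj; apply.
rewrite IH andbT /=; apply/hasP => -[s /mapP[p Hp ->] /mapP[q Hq]].
by move: Hq; rewrite mem_comps0; case: q.
Qed.

Lemma mem_comps L p : (p \in comps L) = (all (fun c => 0 < c)%N p && (sumn p == L)).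
Proof.
case: L => [|L] /=.
  rewrite inE; case: p => [|c p] //=; case: c => //= c; rewrite andbC; by case: (sumn p).
apply/mapP/idP.
  move=> [q]; rewrite mem_comps0; case: q => [|d r] //= /andP[Ha /eqP Hs] ->.
  by rewrite /= Ha -Hs addSn eqxx.
case: p => [|c r] //= /andP[/andP[c0 Ha] /eqP Hs].
case: c c0 Hs => [|c] // _ Hs; exists (c :: r) => //.
by rewrite mem_comps0 /= Ha; apply/eqP; lia.
Qed.

Lemma comps_uniq L : uniq (comps L).
Proof.
case: L => [|L] //=; rewrite map_inj_in_uniq ?comps0_uniq //.
move=> p q; rewrite !mem_comps0; case: p => [|d r] //; case: q => [|d' r'] //= _ _ [-> ->] //.
Qed.

Lemma size_seq_of k L (f : {ffun 'I_k -> 'I_L}) : size (seq_of f) = k.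
Proof. by rewrite /seq_of size_map size_enum_ord. Qed.

Lemma seq_of_eq L (p : seq nat) (f : {ffun 'I_(size p) -> 'I_L.+1}) :
  all (fun c => c < L.+1)%N p ->
  (seq_of f == p) = (f == [ffun i : 'I_(size p) => (inord (nth 0 p i) : 'I_L.+1)]).
Proof.
move=> /allP Hp; apply/eqP/eqP.
  move=> H; apply/ffunP => i; rewrite ffunE; apply/val_inj; rewrite /= inordK.
    have := congr1 (fun s => nth 0 s i) H.
    by rewrite /= /seq_of (nth_map i) ?size_enum_ord // nth_ord_enum.
  by apply: Hp; apply: mem_nth.
move=> ->; apply: (@eq_from_nth _ 0); first by rewrite size_seq_of.
move=> i; rewrite size_seq_of => hi.
rewrite /seq_of (nth_map (Ordinal hi)) ?size_enum_ord // ffunE /= nth_enum_ord // inordK //.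
by apply: Hp; apply: mem_nth.
Qed.

Local Open Scope ring_scope.

Lemma sum_seq_of (R : realType) L (p : seq nat) : p \in comps L ->
  \sum_(k < L.+1) \sum_(f : {ffun 'I_k -> 'I_L.+1}) (if seq_of f == p then 1 else 0 : R) = 1.
Proof.
rewrite mem_comps => /andP[Hpos /eqP Hs].
have hsz : (size p < L.+1)%N.
  rewrite ltnS -Hs; elim: p Hpos {Hs} => [|c p IH] //= /andP[c0 /IH]; lia.
rewrite (bigD1 (Ordinal hsz)) //= [X in _ + X]big1 ?addr0.
  rewrite (eq_bigr (fun f => if f == [ffun i : 'I_(size p) => (inord (nth 0%N p i) : 'I_L.+1)] then 1 else 0)); last first.
    move=> f _; rewrite seq_of_eq //; apply/allP => c cp.
    rewrite ltnS -Hs; elim: p cp {Hpos Hs hsz f} => [|c' p IH] //=; rewrite inE => /orP[/eqP ->|/IH]; lia.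
  by rewrite -big_mkcond big_pred1_eq.
move=> k /negPf hk; apply: big1 => f _.
case: eqP => // E; move: hk; rewrite -val_eqE /= -E size_seq_of eqxx //.
Qed.

Lemma sum_ind_seq (R : realType) (s : seq (seq nat)) (q : seq nat) (G : seq nat -> R) :
  uniq s -> \sum_(p <- s) (if q == p then G p else 0) = if q \in s then G q else 0.
Proof.
move=> Us; case: ifP => qs.
  rewrite (bigD1_seq q) //= eqxx big1 ?addr0 // => p /negPf; rewrite eq_sym => ->//.
by rewrite big_seq big1 // => p ps; case: eqP => // E; move: qs; rewrite E ps.
Qed.

Lemma coeffH_list (R : realType) m n L (u v : R) :
  coeffH m n L u v = \sum_(p <- comps L | avoids_tau m n p) u ^+ size p * v ^+ head 0%N p.
Proof.
rewrite /coeffH /parts /Defs.fst /len /is_factorization.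
transitivity (\sum_(k < L.+1) \sum_(f : {ffun 'I_k -> 'I_L.+1}) \sum_(p <- comps L)
   (if seq_of f == p then (if avoids_tau m n p then u ^+ size p * v ^+ head 0%N p else 0) else 0)).
  apply: eq_bigr => k _; rewrite big_mkcond; apply: eq_bigr => f _.
  rewrite sum_ind_seq ?comps_uniq // mem_comps.
  by case: (all _ _); case: (sumn _ == L); case: (avoids_tau _ _ _).
under eq_bigr => k _ do rewrite exchange_big /=.
rewrite exchange_big /= [RHS]big_mkcond /=.
rewrite big_seq_cond [RHS]big_seq_cond; apply: eq_bigr => p /andP[pL _].
transitivity (\sum_(i < L.+1) \sum_(f : {ffun 'I_i -> 'I_L.+1})
   (if seq_of f == p then 1 else 0) * (if avoids_tau m n p then u ^+ size p * v ^+ head 0%N p else 0)).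
  by apply: eq_bigr => k _; apply: eq_bigr => f _; case: eqP => _; rewrite ?mul1r ?mul0r.
under eq_bigr => k _ do rewrite -big_distrl /=.
by rewrite -big_distrl /= sum_seq_of // mul1r.
Qed.

Lemma avoids_iff m n p : (0 < m)%N -> avoids_tau m n p = (fsum m p < n)%N.
Proof.
move=> m0; rewrite /avoids_tau; case: asboolP => [H|H] /=.
  by move/(contains_iff n p m0): H => H; rewrite ltnNge H.
apply/esym; rewrite ltnNge; apply/negP => h; apply: H; exact/(contains_iff n p m0).
Qed.

Definition wfl (R : realType) (v : R) (fl : bool) : R := if fl then v else 1.

Definition wt (R : realType) m (u v : R) (fl : bool) (b r : nat) (p : seq nat) : R :=
  if p is d :: rest then
    (if ((r + d) %/ m + fsum m rest <= b)%N then wfl v fl ^+ d * u ^+ size rest else 0)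
  else 0.
Arguments wt : simpl never.

Definition In (R : realType) m (u v : R) fl b r L : R := \sum_(p <- comps0 L) wt m u v fl b r p.

Definition okb m b r : bool := (r.+1 < m)%N || (0 < b)%N.
Definition stepb m b r : nat := if (r.+1 < m)%N then b else b.-1.
Definition stepr m r : nat := if (r.+1 < m)%N then r.+1 else 0%N.

Lemma wt_incr (R : realType) m (u v : R) fl b r d rest : (r < m)%N ->
  wt m u v fl b r (d.+1 :: rest) =
  if okb m b r then wfl v fl * wt m u v fl (stepb m b r) (stepr m r) (d :: rest) else 0.
Proof.
move=> rm; rewrite /wt /okb /stepb /stepr.
case: ltnP => hr /=.
  by rewrite addnS -addSn; case: ifP => _; rewrite ?mulr0 // exprS mulrA.
have rE : r.+1 = m by apply/eqP; rewrite eqn_leq rm hr.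
have m0 : (0 < m)%N by rewrite -rE.
rewrite addnS -addSn rE add0n divnDl ?dvdnn // divnn m0.
case: b => [|b] //=.
by rewrite add1n addSn ltnS; case: ifP => _; rewrite ?mulr0 // exprS mulrA.
Qed.

Lemma wt_new (R : realType) m (u v : R) fl b r d rest : (r < m)%N ->
  wt m u v fl b r (0%N :: d.+1 :: rest) =
  if okb m b 0 then u * wt m u v false (stepb m b 0) (stepr m 0) (d :: rest) else 0.
Proof.
move=> rm; rewrite /wt /okb /stepb /stepr /fsum /= -/(fsum m rest) addn0 divn_small // add0n.
rewrite expr0 mul1r expr1n mul1r exprS.
case: ltnP => hm /=.
  by rewrite add1n; case: ifP => _; rewrite ?mulr0.
have m1 : m = 1%N by apply/eqP; rewrite eqn_leq hm (leq_ltn_trans _ rm).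
rewrite m1 !divn1 add0n.
case: b => [|b] //=.
by rewrite addSn ltnS; case: ifP => _; rewrite ?mulr0.
Qed.

Lemma In_S (R : realType) m (u v : R) fl b r L : (r < m)%N ->
  In m u v fl b r L.+1 =
  (if okb m b r then wfl v fl * In m u v fl (stepb m b r) (stepr m r) L else 0) +
  (if okb m b 0 then u * In m u v false (stepb m b 0) (stepr m 0) L else 0).
Proof.
move=> rm; rewrite /In /= big_cat !big_map; congr (_ + _).
  case: ifP => ok.
    rewrite mulr_sumr big_seq [RHS]big_seq; apply: eq_bigr => p.
    rewrite mem_comps0; case: p => [|d rest] //= _.
    by rewrite wt_incr // ok.
  rewrite big_seq big1 // => p; rewrite mem_comps0; case: p => [|d rest] //= _.
  by rewrite wt_incr // ok.
case: ifP => ok.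
  rewrite mulr_sumr big_seq [RHS]big_seq; apply: eq_bigr => p.
  rewrite mem_comps0; case: p => [|d rest] //= _.
  by rewrite wt_new // ok.
rewrite big_seq big1 // => p; rewrite mem_comps0; case: p => [|d rest] //= _.
by rewrite wt_new // ok.
Qed.

Lemma In_0 (R : realType) m (u v : R) fl b r : (r < m)%N -> In m u v fl b r 0 = 1.
Proof.
move=> rm; rewrite /In /= big_seq1 /wt /fsum /= addn0 divn_small //=.
  by rewrite !expr0 mulr1.
by rewrite addn0.
Qed.

Lemma coeffH_0 (R : realType) m n (u v : R) : (0 < m)%N -> (0 < n)%N -> coeffH m n 0 u v = 1.
Proof.
move=> m0 n0; rewrite coeffH_list /= big_cons big_nil avoids_iff //= /fsum /=.
by rewrite n0 expr0 mulr1 addr0.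
Qed.

Lemma coeffH_S (R : realType) m n L (u v : R) : (0 < m)%N -> (0 < n)%N ->
  coeffH m n L.+1 u v =
  if okb m n.-1 0 then u * v * In m u v true (stepb m n.-1 0) (stepr m 0) L else 0.
Proof.
move=> m0 n0; rewrite coeffH_list /= big_map /In.
rewrite big_mkcond /=.
rewrite big_seq (eq_bigr (fun p => u * wt m u v true n.-1 0 (incr_head p))); last first.
  move=> p; rewrite mem_comps0; case: p => [|d rest] //= _.
  rewrite avoids_iff // /wt /fsum /= -/(fsum m rest) add0n.
  case: n n0 => [|n] //= _; rewrite ltnS; case: ifP => _; last by rewrite mulr0.
  by rewrite exprS (mulrC (v ^+ _)) mulrA.
rewrite -big_seq.
case: ifP => ok.
  rewrite -mulrA mulr_sumr mulr_sumr big_seq [RHS]big_seq; apply: eq_bigr => p.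
  rewrite mem_comps0; case: p => [|d rest] //= _.
  by rewrite wt_incr // ok /=.
rewrite big_seq big1 // => p; rewrite mem_comps0; case: p => [|d rest] //= _.
by rewrite wt_incr // ok mulr0.
Qed.


Local Open Scope ring_scope.

Lemma geomS (R : realType) (a : R) k : (1 - a) * \sum_(d < k) a ^+ d = 1 - a ^+ k.
Proof.
elim: k => [|k IH]; first by rewrite big_ord0 mulr0 expr0 subrr.
rewrite big_ord_recr /= mulrDr IH exprS; ring.
Qed.

Definition alf (R : realType) (x u : R) : R := (1 - x) / (1 - x - u * x).
Definition Gf (R : realType) m (x u : R) (b : nat) : R :=
  alf x u - alf x u * (zH m x u - x ^+ m) / (1 - x ^+ m) * zH m x u ^+ b.
Definition Tw (R : realType) m (x u w : R) (b : nat) : R :=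
  \sum_(j < b) ((w * x) ^+ m) ^+ j * Gf m x u (b.-1 - j).
Definition Yf (R : realType) m (x u v : R) (fl : bool) (b r : nat) : R :=
  Gf m x u b * \sum_(d < m - r) (wfl v fl * x) ^+ d +
  (wfl v fl * x) ^+ (m - r) * (\sum_(e < m) (wfl v fl * x) ^+ e) * Tw m x u (wfl v fl) b.

Lemma Tw0 (R : realType) m (x u w : R) : Tw m x u w 0 = 0.
Proof. by rewrite /Tw big_ord0. Qed.

Lemma Tw_S (R : realType) m (x u w : R) b :
  Tw m x u w b.+1 = Gf m x u b + (w * x) ^+ m * Tw m x u w b.
Proof.
rewrite /Tw big_ord_recl /= expr0 mul1r subn0 mulr_sumr; congr (_ + _).
apply: eq_bigr => j _; rewrite exprS -mulrA; congr (_ * (_ * Gf _ _ _ _)).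
rewrite /bump /=; lia.
Qed.

Lemma T1_closed (R : realType) m (x u : R) b : 1 - x ^+ m != 0 ->
  Tw m x u 1 b = alf x u * (1 - zH m x u ^+ b) / (1 - x ^+ m).
Proof.
move=> h; elim: b => [|b IH]; first by rewrite Tw0 expr0 subrr mulr0 mul0r.
rewrite Tw_S IH mul1r /Gf exprS.
move: (zH m x u) (zH m x u ^+ b) (alf x u) (x ^+ m) h => z Z a X h.
by field.
Qed.

Lemma Tv_closed (R : realType) m (x u w : R) b :
  1 - x ^+ m != 0 -> 1 - (w * x) ^+ m != 0 -> zH m x u - (w * x) ^+ m != 0 ->
  Tw m x u w b = alf x u * (1 - ((w * x) ^+ m) ^+ b) / (1 - (w * x) ^+ m)
    - alf x u * (zH m x u - x ^+ m) / (1 - x ^+ m)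
      * (zH m x u ^+ b - ((w * x) ^+ m) ^+ b) / (zH m x u - (w * x) ^+ m).
Proof.
move=> h1 h2 h3; elim: b => [|b IH]; first by rewrite Tw0 !expr0 !subrr !mulr0 !mul0r subrr.
rewrite Tw_S IH /Gf !exprS.
move: (zH m x u) (zH m x u ^+ b) (alf x u) (x ^+ m) ((w * x) ^+ m) (((w * x) ^+ m) ^+ b) h1 h2 h3
  => z Z a X q Q h1 h2 h3.
by field; rewrite h1 h2 h3.
Qed.

Lemma geom_closed (R : realType) (a : R) k : 1 - a != 0 ->
  \sum_(d < k) a ^+ d = (1 - a ^+ k) / (1 - a).
Proof. by move=> h; rewrite -(geomS a k) mulrAC divff // mul1r. Qed.

Lemma G_eq (R : realType) m (x u : R) b : (0 < m)%N ->
  1 - x != 0 -> 1 - x - u * x != 0 -> 1 - x - u * (x - x ^+ m) != 0 -> 1 - x ^+ m != 0 ->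
  Gf m x u b = 1 + x * u * (Gf m x u b * \sum_(d < m.-1) x ^+ d
      + x ^+ m.-1 * (\sum_(e < m) x ^+ e) * Tw m x u 1 b).
Proof.
move=> m0 h1 h2 h3 h4.
rewrite T1_closed // !geom_closed // /Gf /zH /alf.
have hX : x ^+ m = x * x ^+ m.-1 by rewrite -exprS prednK.
rewrite hX in h3 h4 *.
move: (x ^+ m.-1) (_ ^+ b) h3 h4 => Y1 Zb h3 h4.
by field; rewrite h1 h2 h3 h4.
Qed.

Lemma geom_recl (R : realType) (a : R) k :
  \sum_(d < k.+1) a ^+ d = 1 + a * \sum_(d < k) a ^+ d.
Proof.
rewrite big_ord_recl expr0 mulr_sumr; congr (_ + _).
by apply: eq_bigr => i _; rewrite exprS.
Qed.

Lemma Y_E2 (R : realType) m (x u v : R) fl b r : (r < m)%N ->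
  Yf m x u v fl b r = Gf m x u b + wfl v fl * x *
    (if okb m b r then Yf m x u v fl (stepb m b r) (stepr m r) else 0).
Proof.
move=> rm; rewrite /okb /stepb /stepr; case: ltnP => hr /=.
  rewrite /Yf; have -> : (m - r = (m - r.+1).+1)%N by lia.
  rewrite geom_recl exprS.
  move: (wfl v fl * x) => a; ring.
rewrite /Yf; have -> : (m - r = 1)%N by lia.
rewrite big_ord1 !expr0 expr1 mulr1.
case: b => [|b] /=; first by rewrite Tw0 !mulr0 addr0.
rewrite subn0 Tw_S; ring.
Qed.

Lemma Y_E1 (R : realType) m (x u v : R) b : (0 < m)%N ->
  1 - x != 0 -> 1 - x - u * x != 0 -> 1 - x - u * (x - x ^+ m) != 0 -> 1 - x ^+ m != 0 ->
  Gf m x u b = 1 + x * u *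
    (if okb m b 0 then Yf m x u v false (stepb m b 0) (stepr m 0) else 0).
Proof.
move=> m0 h1 h2 h3 h4.
rewrite {1}(G_eq b m0 h1 h2 h3 h4) /okb /stepb /stepr.
case: ltnP => hm /=.
  by rewrite /Yf /wfl !mul1r subn1.
have m1 : m = 1%N by lia.
rewrite m1 big_ord0 big_ord1 /= !expr0 mulr0 add0r !mul1r.
case: b => [|b] /=; first by rewrite Tw0.
rewrite Tw_S /Yf /wfl subn0 !big_ord1 !expr0 !mul1r !expr1 mulr1. by rewrite mulr1.
Qed.

Lemma Y_FP (R : realType) m (x u v : R) fl b r : (r < m)%N ->
  1 - x != 0 -> 1 - x - u * x != 0 -> 1 - x - u * (x - x ^+ m) != 0 -> 1 - x ^+ m != 0 ->
  Yf m x u v fl b r = 1 + x *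
    ((if okb m b r then wfl v fl * Yf m x u v fl (stepb m b r) (stepr m r) else 0) +
     (if okb m b 0 then u * Yf m x u v false (stepb m b 0) (stepr m 0) else 0)).
Proof.
move=> rm h1 h2 h3 h4.
have m0 : (0 < m)%N by lia.
rewrite Y_E2 // (Y_E1 v b m0 h1 h2 h3 h4).
case: (okb m b r); case: (okb m b 0); ring.
Qed.

Lemma Ystart (R : realType) m (x u v : R) fl b : (0 < m)%N ->
  (if okb m b 0 then Yf m x u v fl (stepb m b 0) (stepr m 0) else 0) =
  Gf m x u b * \sum_(d < m.-1) (wfl v fl * x) ^+ d
  + (wfl v fl * x) ^+ m.-1 * (\sum_(e < m) (wfl v fl * x) ^+ e) * Tw m x u (wfl v fl) b.
Proof.
move=> m0; rewrite /okb /stepb /stepr.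
case: ltnP => hm /=; first by rewrite /Yf subn1.
have m1 : m = 1%N by lia.
rewrite m1 big_ord0 big_ord1 /= !expr0 mulr0 add0r !mul1r.
case: b => [|b] /=; first by rewrite Tw0.
rewrite Tw_S /Yf subn0 !big_ord1 !expr0 !expr1 mulr1. by rewrite mulr1.
Qed.

Lemma final_eq (R : realType) m n (x u v : R) : (0 < m)%N -> (0 < n)%N ->
  1 - x != 0 -> 1 - x - u * x != 0 -> 1 - x - u * (x - x ^+ m) != 0 -> 1 - x ^+ m != 0 ->
  1 - v * x != 0 -> 1 - (v * x) ^+ m != 0 -> zH m x u - (v * x) ^+ m != 0 ->
  Hclosed m n x u v =
  1 + x * (if okb m n.-1 0 then u * v * Yf m x u v true (stepb m n.-1 0) (stepr m 0) else 0).
Proof.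
move=> m0 n0 h1 h2 h3 h4 h5 h6 h7.
have -> : (if okb m n.-1 0 then u * v * Yf m x u v true (stepb m n.-1 0) (stepr m 0) else 0)
  = u * v * (if okb m n.-1 0 then Yf m x u v true (stepb m n.-1 0) (stepr m 0) else 0).
  by case: ifP; rewrite ?mulr0.
rewrite Ystart // /wfl Tv_closed // !geom_closed //.
rewrite /Hclosed /Gf /alf.
case: n n0 => [|n] // _ /=; rewrite subn1 /=.
rewrite exprM !exprS expr0 mulr1.
have hX : x ^+ m = x * x ^+ m.-1 by rewrite -exprS prednK.
have hq : (v * x) ^+ m = v * x * (v * x) ^+ m.-1 by rewrite -exprS prednK.
rewrite /zH hX hq in h3 h4 h6 h7 *.
move: (x ^+ m.-1) ((v * x) ^+ m.-1) h3 h4 h6 h7 => Y1 P h3 h4 h6 h7.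
set z := (x * Y1 + _).
move: (z ^+ n) => Z.
move: ((v * x * P) ^+ n) => Q.
rewrite /z in h7 *.
have h8 : x * Y1 * (1 - x - u * (x - x * Y1)) + u * (x * Y1) * (1 - x * Y1) +
      - (v * x * P) * (1 - x - u * (x - x * Y1)) != 0.
  suff -> : x * Y1 * (1 - x - u * (x - x * Y1)) + u * (x * Y1) * (1 - x * Y1) +
      - (v * x * P) * (1 - x - u * (x - x * Y1)) =
    (x * Y1 + u * (x * Y1) * (1 - x * Y1) / (1 - x - u * (x - x * Y1)) - v * x * P)
      * (1 - x - u * (x - x * Y1)) by rewrite mulf_neq0.
  by field.
by field; rewrite ?h1 ?h2 ?h3 ?h4 ?h5 ?h6 ?h8.
Qed.


Local Open Scope ring_scope.

Definition PS (R : realType) m (u v x : R) fl b r N : R :=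
  \sum_(L < N) In m u v fl b r L * x ^+ L.

Lemma PS_S (R : realType) m (u v x : R) fl b r N : (r < m)%N ->
  PS m u v x fl b r N.+1 = 1 + x *
    ((if okb m b r then wfl v fl * PS m u v x fl (stepb m b r) (stepr m r) N else 0) +
     (if okb m b 0 then u * PS m u v x false (stepb m b 0) (stepr m 0) N else 0)).
Proof.
move=> rm; rewrite /PS big_ord_recl In_0 // expr0 mulr1; congr (_ + _).
under eq_bigr => i _ do rewrite /= /bump /= add1n In_S // exprS.
set A := (fun i : nat => In m u v fl (stepb m b r) (stepr m r) i).
set B := (fun i : nat => In m u v false (stepb m b 0) (stepr m 0) i).
rewrite (eq_bigr (fun i : 'I_N => x * (if okb m b r then wfl v fl * (A i * x ^+ i) else 0)
   + x * (if okb m b 0 then u * (B i * x ^+ i) else 0))); last first.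
  by move=> i _; rewrite /A /B; case: (okb m b r); case: (okb m b 0); ring.
rewrite big_split /= mulrDr; congr (_ + _).
  by case: (okb m b r); rewrite ?mulr0 ?big1_eq // -!mulr_sumr.
by case: (okb m b 0); rewrite ?mulr0 ?big1_eq // -!mulr_sumr.
Qed.

Lemma neq1 (R : realType) (a : R) : `|a| < 1 -> 1 - a != 0.
Proof.
move=> h; rewrite subr_eq0; apply/eqP => E; move: h; rewrite -E normr1 ltxx //.
Qed.

Lemma normX_le (R : realType) (a : R) k : (0 < k)%N -> `|a| <= 1 -> `|a ^+ k| <= `|a|.
Proof.
move=> k0 h; rewrite -(prednK k0) exprS normrM.
have : `|a ^+ k.-1| <= 1 by rewrite normrX exprn_ile1.
move=> h2; rewrite -[X in _ <= X]mulr1 ler_wpM2l //.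
Qed.

Lemma small_facts (R : realType) m (x u v : R) : (0 < m)%N ->
  `|x| < 1/8 -> `|u| < 1/8 -> `|v| < 1/8 ->
  [/\ 1 - x != 0, 1 - x - u * x != 0, 1 - x - u * (x - x ^+ m) != 0, 1 - x ^+ m != 0
   & [/\ 1 - v * x != 0, 1 - (v * x) ^+ m != 0 & (x != 0 -> zH m x u - (v * x) ^+ m != 0)]].
Proof.
move=> m0 hx hu hv.
have nx := normr_ge0 x; have nu := normr_ge0 u; have nv := normr_ge0 v.
have hX : `|x ^+ m| <= `|x|.
  by (apply: normX_le => //; lra).
have nX := normr_ge0 (x ^+ m).
have hvx : `|v * x| <= 1/64.
  by (rewrite normrM; have := ler_pM nv nx (ltW hv) (ltW hx); lra).
have hvx1 : `|v * x| <= 1 by lra.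
have hq : `|(v * x) ^+ m| <= 1/64 := le_trans (@normX_le _ (v * x) m m0 hvx1) hvx.
have hxmX : `|x - x ^+ m| <= 1/4.
  apply: le_trans (ler_normB _ _) _; lra.
have hux : `|u * (x - x ^+ m)| <= 1/32.
  rewrite normrM; have := ler_pM nu (normr_ge0 _) (ltW hu) hxmX; lra.
have hE : 1/2 < `|1 - x - u * (x - x ^+ m)|.
  have := ler_normD (1 - x - u * (x - x ^+ m)) (x + u * (x - x ^+ m)).
  have -> : 1 - x - u * (x - x ^+ m) + (x + u * (x - x ^+ m)) = 1 by ring.
  rewrite normr1 => h.
  have := ler_normD x (u * (x - x ^+ m)); lra.
split.
- by apply: neq1; lra.
- rewrite -addrA -opprD; apply: neq1.
  have := ler_normD x (u * x); rewrite (normrM u x).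
  have := ler_pM nu nx (ltW hu) (ltW hx); lra.
- by rewrite -normr_eq0; apply/eqP => E; lra.
- by apply: neq1; lra.
split.
- by apply: neq1; lra.
- by apply: neq1; lra.
move=> x0.
set E := 1 - x - u * (x - x ^+ m).
have E0 : E != 0.
  by (rewrite -normr_eq0; apply/eqP => h; move: hE; rewrite /E h; lra).
have -> : zH m x u - (v * x) ^+ m = x ^+ m * (1 + u * (1 - x ^+ m) / E - v ^+ m).
  by rewrite /zH exprMn -/E; field.
rewrite mulf_neq0 ?expf_neq0 //.
have ht : `|u * (1 - x ^+ m) / E| < 1/2.
  rewrite normrM normfV normrM ltr_pdivrMr; last by lra.
  have h2 : `|1 - x ^+ m| <= 2.
    by (apply: le_trans (ler_normB _ _) _; rewrite normr1; lra).
  have := ler_pM nu (normr_ge0 _) (ltW hu) h2; lra.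
have hv1 : `|v| <= 1 by lra.
have hvm : `|v ^+ m| <= 1/8.
  by (apply: le_trans (@normX_le _ v m m0 _) _; lra).
rewrite -normr_eq0; apply/eqP => h.
have := ler_normD (1 + u * (1 - x ^+ m) / E - v ^+ m) (v ^+ m - u * (1 - x ^+ m) / E).
have -> : 1 + u * (1 - x ^+ m) / E - v ^+ m + (v ^+ m - u * (1 - x ^+ m) / E) = 1 by ring.
rewrite h normr1 => h1.
have := ler_normB (v ^+ m) (u * (1 - x ^+ m) / E); lra.
Qed.

Lemma le_sum_term (R : realType) (I : finType) (F : I -> R) i :
  (forall j, 0 <= F j) -> F i <= \sum_j F j.
Proof. by move=> h; rewrite (bigD1 i) //= lerDl sumr_ge0. Qed.

Definition Cb (R : realType) m n (x u v : R) : R :=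
  \sum_(fl : bool) \sum_(b < n) \sum_(r < m) `|Yf m x u v fl b r|.

Lemma Y_le_C (R : realType) m n (x u v : R) fl b r : (b < n)%N -> (r < m)%N ->
  `|Yf m x u v fl b r| <= Cb m n x u v.
Proof.
move=> hb hr; rewrite /Cb.
have s1 : `|Yf m x u v fl b r| <= \sum_(r' < m) `|Yf m x u v fl b r'| :=
  @le_sum_term _ _ (fun r' : 'I_m => `|Yf m x u v fl b r'|) (Ordinal hr) (fun _ => normr_ge0 _).
have s2 : \sum_(r' < m) `|Yf m x u v fl b r'| <=
    \sum_(b' < n) \sum_(r' < m) `|Yf m x u v fl b' r'| :=
  @le_sum_term _ _ (fun b' : 'I_n => \sum_(r' < m) `|Yf m x u v fl b' r'|) (Ordinal hb)
    (fun _ => sumr_ge0 _ (fun _ _ => normr_ge0 _)).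
have s3 : \sum_(b' < n) \sum_(r' < m) `|Yf m x u v fl b' r'| <=
    \sum_(fl' : bool) \sum_(b' < n) \sum_(r' < m) `|Yf m x u v fl' b' r'| :=
  @le_sum_term _ _ (fun fl' : bool => \sum_(b' < n) \sum_(r' < m) `|Yf m x u v fl' b' r'|) fl
    (fun _ => sumr_ge0 _ (fun _ _ => sumr_ge0 _ (fun _ _ => normr_ge0 _))).
exact: le_trans s1 (le_trans s2 s3).
Qed.

Lemma stepb_lt m n b r : (b < n)%N -> (stepb m b r < n)%N.
Proof. by move=> hb; rewrite /stepb; case: ifP => h; lia. Qed.

Lemma stepr_lt m r : (0 < m)%N -> (stepr m r < m)%N.
Proof. by move=> m0; rewrite /stepr; case: ifP => h; lia. Qed.

Lemma err_bound (R : realType) m n (x u v : R) : (0 < m)%N ->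
  `|x| < 1/8 -> `|u| < 1/8 -> `|v| < 1/8 ->
  forall N fl b r, (b < n)%N -> (r < m)%N ->
  `|PS m u v x fl b r N - Yf m x u v fl b r| <= Cb m n x u v * (`|x| * (1 + `|u|)) ^+ N.
Proof.
move=> m0 hx hu hv.
have [h1 h2 h3 h4 _] := small_facts m0 hx hu hv.
have C0 : 0 <= Cb m n x u v by rewrite /Cb; do 3 apply: sumr_ge0 => ? _.
have rho0 : 0 <= `|x| * (1 + `|u|) by rewrite mulr_ge0 // addr_ge0.
elim=> [|N IH] fl b r hb hr.
  by rewrite /PS big_ord0 sub0r normrN expr0 mulr1 Y_le_C.
set C := Cb m n x u v; set rho := `|x| * (1 + `|u|).
have hw : `|wfl v fl| <= 1.
  by rewrite /wfl; case: fl; rewrite ?normr1 //; apply: ltW; apply: lt_trans hv _; lra.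
have key : PS m u v x fl b r N.+1 - Yf m x u v fl b r = x *
   ((if okb m b r then wfl v fl * (PS m u v x fl (stepb m b r) (stepr m r) N
                                     - Yf m x u v fl (stepb m b r) (stepr m r)) else 0) +
    (if okb m b 0 then u * (PS m u v x false (stepb m b 0) (stepr m 0) N
                                     - Yf m x u v false (stepb m b 0) (stepr m 0)) else 0)).
  by rewrite PS_S // (Y_FP v fl b hr h1 h2 h3 h4); case: (okb m b r); case: (okb m b 0); ring.
have e1 := IH fl (stepb m b r) (stepr m r) (stepb_lt m r hb) (stepr_lt r m0).
have e2 := IH false (stepb m b 0) (stepr m 0) (stepb_lt m 0 hb) (stepr_lt 0 m0).
have Cr0 : 0 <= C * rho ^+ N by rewrite mulr_ge0 // exprn_ge0.
have b1 : `|if okb m b r then wfl v fl * (PS m u v x fl (stepb m b r) (stepr m r) N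
                                     - Yf m x u v fl (stepb m b r) (stepr m r)) else 0|
          <= C * rho ^+ N.
  case: (okb m b r); last by rewrite normr0.
  rewrite normrM; rewrite -[X in _ <= X]mul1r; apply: ler_pM => //.
have b2 : `|if okb m b 0 then u * (PS m u v x false (stepb m b 0) (stepr m 0) N
                                     - Yf m x u v false (stepb m b 0) (stepr m 0)) else 0|
          <= `|u| * (C * rho ^+ N).
  case: (okb m b 0); last by rewrite normr0 mulr_ge0.
  by rewrite normrM; apply: ler_wpM2l.
rewrite key normrM exprS.
apply: le_trans (ler_wpM2l (normr_ge0 x) (le_trans (ler_normD _ _) (lerD b1 b2))) _.
by rewrite /rho le_eqVlt; apply/orP; left; apply/eqP; ring.
Qed.

Local Open Scope classical_set_scope.
Local Open Scope ring_scope.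

Lemma PS_cvg (R : realType) m n (x u v : R) fl b r : (0 < m)%N ->
  `|x| < 1/8 -> `|u| < 1/8 -> `|v| < 1/8 -> (b < n)%N -> (r < m)%N ->
  (fun N => PS m u v x fl b r N) @ \oo --> Yf m x u v fl b r.
Proof.
move=> m0 hx hu hv hb hr.
apply/subr_cvg0/norm_cvg0P.
apply: (@squeeze_cvgr _ _ _ _ (cst 0) (fun N => Cb m n x u v * (`|x| * (1 + `|u|)) ^+ N)).
- near=> N; rewrite normr_ge0 /=; exact: err_bound.
- exact: cvg_cst.
- have hr1 : Num.norm (`|x| * (1 + `|u|)) < 1.
    have nx := normr_ge0 x; have nu := normr_ge0 u.
    rewrite ger0_norm ?mulr_ge0 ?addr_ge0 //.
    have := ler_pM nx (addr_ge0 ler01 nu) (ltW hx) (lerD (lexx 1) (ltW hu)); lra.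
  have := cvgMl_tmp (a := Cb m n x u v) (cvg_expr hr1).
  by rewrite mulr0; apply.
Unshelve. all: by end_near.
Qed.

Lemma Hclosed0 (R : realType) m n (u v : R) : (0 < m)%N -> (0 < n)%N -> Hclosed m n 0 u v = 1.
Proof.
move=> m0 n0; rewrite /Hclosed /zH !mulr0 !expr0n /= muln_eq0.
rewrite -[m == 0%N]negbK -lt0n m0 /= -[n == 0%N]negbK -lt0n n0 /=.
by rewrite !(subrr, mulr0, mul0r, addr0).
Qed.


Unset Implicit Arguments.
Local Open Scope classical_set_scope.
Local Open Scope ring_scope.

Theorem lemma5p1 (R : realType) (m n : nat) :
  (0 < m)%N -> (0 < n)%N ->
  exists eps : R, 0 < eps /\
    forall x u v : R, `|x| < eps -> `|u| < eps -> `|v| < eps ->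
      (fun N : nat => \sum_(L < N) coeffH m n L u v * x ^+ L) @ \oo
        --> Hclosed m n x u v.
Proof.
move=> m0 n0; exists (1/8); split; first lra.
move=> x u v hx hu hv.
have [h1 h2 h3 h4 [h5 h6 h7]] := small_facts m0 hx hu hv.
have SS : forall N, \sum_(L < N.+1) coeffH m n L u v * x ^+ L = 1 + x *
   (if okb m n.-1 0 then u * v * PS m u v x true (stepb m n.-1 0) (stepr m 0) N else 0).
  move=> N; rewrite big_ord_recl coeffH_0 // expr0 mulr1; congr (_ + _).
  under eq_bigr => i _ do rewrite /= /bump /= add1n coeffH_S // exprS.
  case: (okb m n.-1 0).
    rewrite /PS !mulr_sumr; apply: eq_bigr => i _; ring.
  by rewrite mulr0 big1 // => i _; rewrite mul0r.
rewrite -cvg_shiftS /=.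
have -> : (fun N => \sum_(L < N.+1) coeffH m n L u v * x ^+ L) =
  (fun N => 1 + x *
   (if okb m n.-1 0 then u * v * PS m u v x true (stepb m n.-1 0) (stepr m 0) N else 0)).
  by apply: funext => N; rewrite SS.
have [->|x0] := eqVneq x 0.
  rewrite Hclosed0 //.
  have -> : (fun N => 1 + 0 *
   (if okb m n.-1 0 then u * v * PS m u v 0 true (stepb m n.-1 0) (stepr m 0) N else 0)) =
    (fun N => (1 : R)) by apply: funext => N; rewrite mul0r addr0.
  exact: cvg_cst.
rewrite final_eq //; last exact: h7.
apply: cvgD; first exact: cvg_cst.
apply: cvgMl_tmp.
case: (okb m n.-1 0); last exact: cvg_cst.
apply: cvgMl_tmp.
apply: (@PS_cvg R m n) => //.
- by apply: stepb_lt; rewrite prednK // ltnSn.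
- exact: stepr_lt.
Qed.
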